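(* Let $m\geq 1$ and let $n,r$ be integers with $r\geq n\geq 5$ and $r\geq 10$, and let $\alpha$ be an integer with $1\leq\alpha<(m+1)^n$. Then $\Gamma_n^{\alpha,r}$ is homotopy equivalent to the induced subcomplex of $\Gamma_n^{\alpha,r}$ on the set of vertices $x$ satisfying: (i) $|x_i|<\lfloor r/2\rfloor$ and $|x_j|+|x_k|\leq\lceil r/2\rceil$ for all $i,j,k\in[n]$ with $j\neq k$; and (ii) there is no four-element set $\{i,j,k,l\}\subseteq[n]$ such that $|x_i|+|x_j|+|x_k|+|x_l|\geq r-1$ and $x_s=0$ for all $s\notin\{i,j,k,l\}$.
   Context: $[n]=\{1,\ldots,n\}$. $\mathbb{Z}^n$ carries the Manhattan metric $d(x,y)=\sum_i|x_i-y_i|$; for $X\subseteq\mathbb{Z}^n$, $\mathrm{VR}(X;r)$ is the simplicial complex on $X$ whose simplices are finite subsets of diameter at most $r$. Let $\prec$ be the anti-lexicographic order on $\mathbb{Z}^n$: $x\prec y$ iff at the largest index $i$ with $x_i\neq y_i$ one has $x_i<y_i$. Let $V_m=\{0,\ldots,m\}^n$. Let $H$ be $V_m$ with its first $\alpha$ elements (with respect to $\prec$) removed, $\delta$ the $\prec$-least element of $H$, and $Y=\{x-\delta: x\in H\}$ (so $\mathbf{0}$ is the least element of $Y$). Then $\Gamma_n^{\alpha,r}$ is the link of $\mathbf{0}$ in $\mathrm{VR}(Y;r)$, i.e. the complex of simplices $\tau$ of $\mathrm{VR}(Y;r)$ with $\mathbf{0}\notin\tau$ and $\tau\cup\{\mathbf{0}\}\in\mathrm{VR}(Y;r)$.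 The induced subcomplex of $K$ on a vertex set $W$ consists of the simplices of $K$ contained in $W$. *)

(* Defs.v *)
From mathcomp Require Import all_boot all_order all_algebra.
From mathcomp Require Import all_classical all_reals all_analysis.
Import numFieldNormedType.Exports.
Import Order.TTheory GRing.Theory Num.Theory.


Local Open Scope classical_set_scope.
Local Open Scope ring_scope.

(* A scomplex on a vertex type V is given by its predicate of simplices, *)
(* a simplex being a finite set of vertices represented by a list.      *)

Definition scomplex (V : choiceType) := seq V -> Prop.

Definition induced_sub (V : choiceType) (K : scomplex V) (W : V -> Prop) : scomplex V :=
  fun s => K s /\ (forall v, v \in s -> W v).

(* Geometric realization |K|, as a subspace of R^V with the product
   (pointwise) topology: the points are the barycentric-coordinate
   functions t >= 0 supported on a simplex of K with sum 1. *)
Arguments induced_sub {V} K W.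

Definition geom_realization (R : realType) (V : choiceType) (K : scomplex V)
  : set {ptws V -> R} :=
  [set t | exists s : seq V, [/\ K s,
      (forall v, v \notin s -> t v = 0),
      (forall v, 0 <= t v) &
      \sum_(v <- undup s) t v = 1]].

Arguments geom_realization R {V} K.

Definition homotopy_between (R : realType) (T U : topologicalType)
  (A : set T) (B : set U) (f g : T -> U) : Prop :=
  exists H : (R * T)%type -> U,
    [/\ {within `[0%R, 1%R] `*` A, continuous H},
        (forall p, (`[0%R, 1%R] `*` A) p -> B (H p)),
        (forall x, A x -> H (0%R, x) = f x) &
        (forall x, A x -> H (1%R, x) = g x)].

Arguments homotopy_between R {T U} A B f g.

Definition homotopy_equivalent (R : realType) (T U : topologicalType)
  (A : set T) (B : set U) : Prop :=
  exists (f : T -> U) (g : U -> T),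
    [/\ {within A, continuous f}, (forall x, A x -> B (f x)),
        {within B, continuous g} & (forall y, B y -> A (g y))] /\
    homotopy_between R A A (g \o f) id /\
    homotopy_between R B B (f \o g) id.

Arguments homotopy_equivalent R {T U} A B.

Definition pt (n : nat) := {ffun 'I_n -> int}.

Definition manhattan (n : nat) (x y : pt n) : int := \sum_(i < n) `|x i - y i|.

Arguments manhattan {n} x y.

Definition VR (n : nat) (X : seq (pt n)) (r : nat) : scomplex (pt n) :=
  fun s => (forall x, x \in s -> x \in X) /\
           (forall x y, x \in s -> y \in s -> manhattan x y <= r%:Z).

Arguments VR {n} X r.

Definition antilex (n : nat) (x y : pt n) : bool :=
  [exists i : 'I_n, (x i < y i) && [forall j : 'I_n, (i < j)%N ==> (x j == y j)]].

Arguments antilex {n} x y.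

Definition Vm (m n : nat) : seq (pt n) :=
  [seq [ffun i => ((f i : nat)%:Z)] | f : {ffun 'I_n -> 'I_m.+1}].

(* H = V_m with its first alpha elements (w.r.t. antilex) removed, i.e. the
   elements having at least alpha antilex-predecessors in V_m. *)
Definition Hset (m n alpha : nat) : seq (pt n) :=
  [seq x <- Vm m n | (alpha <= count (fun y => antilex y x) (Vm m n))%N].

Definition delta (m n alpha : nat) : pt n :=
  head [ffun => 0]
    [seq x <- Hset m n alpha | all (fun y => ~~ antilex y x) (Hset m n alpha)].

Definition Yset (m n alpha : nat) : seq (pt n) :=
  [seq [ffun i => x i - delta m n alpha i] | x : pt n <- Hset m n alpha].

Definition origin (n : nat) : pt n := [ffun => 0].

(* Gamma_n^{alpha,r} = link of 0 in VR(Y; r). *)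
Definition Gamma (m n alpha r : nat) : scomplex (pt n) :=
  fun s => VR (Yset m n alpha) r s /\ origin n \notin s /\
           VR (Yset m n alpha) r (origin n :: s).

Definition good_vertex (n r : nat) (x : pt n) : Prop :=
  [/\ (forall i : 'I_n, `|x i| < (r %/ 2)%N%:Z),
      (forall j k : 'I_n, j != k -> `|x j| + `|x k| <= ((r + 1) %/ 2)%N%:Z) &
      ~ (exists i j k l : 'I_n,
           [/\ uniq [:: i; j; k; l],
               `|x i| + `|x j| + `|x k| + `|x l| >= r%:Z - 1 &
               forall s : 'I_n, s \notin [:: i; j; k; l] -> x s = 0])].

(* Main.v *)
Require Import Defs.
From mathcomp Require Import all_boot all_order all_algebra.
From mathcomp Require Import all_classical all_reals all_analysis.
From mathcomp Require Import zify ring lra.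
Import numFieldNormedType.Exports.
Import Order.TTheory GRing.Theory Num.Theory.

Module MT.
Local Open Scope classical_set_scope.
Local Open Scope ring_scope.

Section Topo.
Context {R : realType} {V : choiceType}.

Definition push (X : seq V) (phi : V -> V) (t : V -> R) : V -> R :=
  fun u => \sum_(v <- X | phi v == u) t v.

Lemma proj_cvg (v : V) (t : {ptws V -> R}) :
  (fun g : {ptws V -> R} => g v) @ nbhs t --> t v.
Proof.
exact: (@proj_continuous V (fun _ => R) v t).
Qed.

Lemma push_cvg {T : Type} (F : set_system T) {FF : Filter F} X phi
  (h : T -> V -> R) (t : V -> R) u :
  (forall v, (fun x => h x v) @ F --> t v) ->
  (fun x => push X phi (h x) u) @ F --> push X phi t u.
Proof.
move=> hc; rewrite /push; elim: X => [|x X IH].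
  under eq_fun do rewrite big_nil. by rewrite big_nil; exact: cvg_cst.
under eq_fun do rewrite big_cons. rewrite big_cons.
case: (phi x == u) => //. exact: cvgD.
Qed.

Lemma ptws_cvg_coord (F : set_system {ptws V -> R}) {FF : Filter F} (f : V -> R) :
  (forall i, (fun g : V -> R => g i) @ F --> f i) -> {ptws, F --> f}.
Proof.
move=> H; rewrite cvg_sup => i.
rewrite cvg_image; last by rewrite eqEsubset; split=> v // _; exists (cst v).
move=> W /= Wf; have Q := H i W Wf.
exists ((@^~ i) @^-1` W) => //.
by rewrite eqEsubset; split => [j [? + <-//]|j Wj]; exists (fun _ => j).
Qed.

End Topo.

End MT.
Import MT.

Module MT2.
Local Open Scope classical_set_scope.
Local Open Scope ring_scope.

Section Geo.
Context {R : realType} {V : choiceType}.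

Definition simp_pt (s : seq V) (t : V -> R) :=
  [/\ (forall v, v \notin s -> t v = 0), (forall v, 0 <= t v) &
      \sum_(v <- undup s) t v = 1].

Lemma sum_supp (X Y : seq V) (t : V -> R) : uniq X -> uniq Y ->
  (forall v, t v != 0 -> v \in X) -> (forall v, t v != 0 -> v \in Y) ->
  \sum_(v <- X) t v = \sum_(v <- Y) t v.
Proof.
move=> uX uY hX hY.
have e1 : \sum_(v <- X) t v = \sum_(v <- X | v \in Y) t v.
  rewrite [RHS]big_mkcond /=; apply: eq_bigr => v _.
  case: ifP => // /negbT vY; apply/eqP; apply: contraNT vY; exact: hY.
have e2 : \sum_(v <- Y) t v = \sum_(v <- Y | v \in X) t v.
  rewrite [RHS]big_mkcond /=; apply: eq_bigr => v _.
  case: ifP => // /negbT vY; apply/eqP; apply: contraNT vY; exact: hX.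
rewrite e1 e2 -big_filter -[RHS]big_filter; apply: perm_big.
apply: uniq_perm; rewrite ?filter_uniq // => v; rewrite !mem_filter andbC //.
Qed.

Lemma simp_pt_sum s t (Z : seq V) : simp_pt s t -> uniq Z -> {subset s <= Z} ->
  \sum_(v <- Z) t v = 1.
Proof.
move=> [h0 _ h1] uZ sZ; rewrite -h1; apply: sum_supp.
- exact: uZ.
- exact: undup_uniq.
- by move=> v; apply: contraNT => vs; rewrite h0 //; apply: contra vs; exact: sZ.
- by move=> v; apply: contraNT; rewrite mem_undup => vs; rewrite h0.
Qed.
Arguments simp_pt_sum {s t Z}.

Lemma simp_pt_conv s1 s2 t1 t2 (a b : R) :
  simp_pt s1 t1 -> simp_pt s2 t2 -> 0 <= a -> 0 <= b -> a + b = 1 ->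
  simp_pt (s1 ++ s2) (fun v => a * t1 v + b * t2 v).
Proof.
move=> h1 h2 a0 b0 ab; case: (h1) => z1 p1 _; case: (h2) => z2 p2 _; split.
- move=> v; rewrite mem_cat negb_or => /andP[v1 v2]; by rewrite z1 // z2 // !mulr0 addr0.
- by move=> v; rewrite addr_ge0 // mulr_ge0.
rewrite big_split /= -!mulr_sumr.
rewrite (simp_pt_sum h1 (undup_uniq _)); last by move=> v; rewrite mem_undup mem_cat => ->.
rewrite (simp_pt_sum h2 (undup_uniq _)); last by move=> v; rewrite mem_undup mem_cat orbC => ->.
by rewrite !mulr1.
Qed.

Lemma simp_pt_push (X : seq V) phi s t : uniq X -> {subset s <= X} ->
  simp_pt s t -> simp_pt (map phi s) (push X phi t).
Proof.
move=> uX sX h; case: (h) => z p _; split.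
- move=> u us; rewrite /push big1 // => v /eqP e; apply: z.
  by apply: contra us => vs; rewrite -e; apply: map_f.
- by move=> u; rewrite /push sumr_ge0.
rewrite /push (exchange_big_dep predT) //=.
have inner : forall v, \sum_(u <- undup (map phi s) | phi v == u) t v =
    if phi v \in undup (map phi s) then t v else 0.
  move=> v; rewrite big_const_seq.
  rewrite (@eq_count _ _ (pred1 (phi v))); last by move=> u; rewrite /= eq_sym.
  rewrite count_uniq_mem ?undup_uniq //.
  by case: (_ \in _) => /=; rewrite ?addr0.
under eq_bigr do rewrite inner.
rewrite -(simp_pt_sum h uX sX); apply: eq_bigr => v _.
case: ifP => // /negbT; rewrite mem_undup => vs; rewrite z //.
by apply: contra vs => vs; apply: map_f.
Qed.

End Geo.
Arguments simp_pt_push {R V X phi s t}.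
Arguments simp_pt_conv {R V s1 s2 t1 t2 a b}.

End MT2.
Import MT2.

Module MT3.
Local Open Scope classical_set_scope.
Local Open Scope ring_scope.

Section Main.
Variables (R : realType) (V : choiceType).
Variables (K : scomplex V) (X : seq V) (W : V -> Prop) (phi1 phi2 : V -> V).
Hypothesis hX : uniq X.
Hypothesis hKX : forall s, K s -> {subset s <= X}.
Hypothesis hher : forall s s', K s -> {subset s' <= s} -> K s'.
Hypothesis c1 : forall s, K s -> K (s ++ map phi1 s).
Hypothesis c2 : forall s, K s -> K (map phi1 s ++ map phi2 (map phi1 s)).
Hypothesis c3 : forall s, K s -> forall v, v \in s -> W (phi2 (phi1 v)).
Hypothesis c4 : forall v, W v -> phi2 (phi1 v) = v.

Let f : {ptws V -> R} -> {ptws V -> R} := push X (phi2 \o phi1).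
Let f1 : {ptws V -> R} -> {ptws V -> R} := push X phi1.
Let wa (l : R) := Num.max (2 * l - 1) 0.
Let wc (l : R) := Num.max (1 - 2 * l) 0.
Let wb (l : R) := 1 - wa l - wc l.
Let H (p : R * {ptws V -> R}) : {ptws V -> R} :=
  fun u => wa p.1 * p.2 u + wb p.1 * f1 p.2 u + wc p.1 * f p.2 u.

Lemma real_simp (K' : scomplex V) t : geom_realization R K' t <-> exists s, K' s /\ simp_pt s t.
Proof.
split; first by move=> [s [ks a b c]]; exists s; split.
by move=> [s [ks [a b c]]]; exists s; split.
Qed.

Lemma f_real t : geom_realization R K t ->
  geom_realization R (induced_sub K W) (f t).
Proof.
move/real_simp => [s [ks hs]]; apply/real_simp.
exists (map (phi2 \o phi1) s); split; last exact (simp_pt_push hX (hKX _ ks) hs).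
split.
  apply: (hher _ _ (c2 _ ks)) => v; rewrite map_comp mem_cat => ->; by rewrite orbT.
by move=> v /mapP [x xs ->]; exact: c3 _ ks x xs.
Qed.

Lemma f_id t : geom_realization R (induced_sub K W) t -> f t = t.
Proof.
move/real_simp => [s [[ks ws] [z p _]]]; apply: funext => u.
rewrite /f /push.
have -> : \sum_(v <- X | (phi2 \o phi1) v == u) t v = \sum_(v <- X | v == u) t u.
  rewrite big_mkcond [RHS]big_mkcond; apply: eq_bigr => v _ /=.
  have [vs|vs] := boolP (v \in s).
    rewrite /= c4; last exact: ws. by case: (v =P u) => [->|].
  by rewrite z // if_same; case: (v =P u) => [e|] //; rewrite -e z.
rewrite big_const_seq.
rewrite (@eq_count _ _ (pred1 u)) // count_uniq_mem //.
have [uX|uX] := boolP (u \in X); first by rewrite /= addr0.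
rewrite /= z //; apply: contra uX; exact: (hKX s ks).
Qed.

Lemma fst_cvg (p : R * {ptws V -> R}) : (fun q : R * {ptws V -> R} => q.1) @ nbhs p --> p.1.
Proof. exact: (@cvg_fst _ _ (nbhs p.1) (nbhs p.2) _). Qed.
Lemma snd_cvg (p : R * {ptws V -> R}) : (fun q : R * {ptws V -> R} => q.2) @ nbhs p --> p.2.
Proof. exact: (@cvg_snd _ _ (nbhs p.1) (nbhs p.2) _). Qed.
Lemma H_cont : continuous H.
Proof.
move=> p.
apply: (@ptws_cvg_coord R V (H @ nbhs p) _ (H p)) => i.
have hfst : forall (g : R -> R), continuous g ->
   (fun q : R * {ptws V -> R} => g q.1) @ nbhs p --> g p.1.
  move=> g cg; exact: (cvg_comp (fun q : R * {ptws V -> R} => q.1) g (fst_cvg p) (cg p.1)).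
have hsnd : forall v, (fun q : R * {ptws V -> R} => q.2 v) @ nbhs p --> p.2 v.
  move=> v; exact: (cvg_comp (fun q : R * {ptws V -> R} => q.2) (fun h : {ptws V -> R} => h v) (snd_cvg p) (proj_cvg v p.2)).
have ca : continuous wa.
  move=> x.
  have -> : wa = (fun l : R^o => 2 * l - 1) \max (fun _ : R^o => 0) by apply: funext => l.
  apply: continuous_max; [|exact: cvg_cst].
  by apply: cvgB; [apply: cvgMr; exact: cvg_id|exact: cvg_cst].
have cc : continuous wc.
  move=> x.
  have -> : wc = (fun l : R^o => 1 - 2 * l) \max (fun _ : R^o => 0) by apply: funext => l.
  apply: continuous_max; [|exact: cvg_cst].
  by apply: cvgB; [exact: cvg_cst|apply: cvgMr; exact: cvg_id].
have cb : continuous wb.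
  move=> x; apply: cvgB; [apply: cvgB; [exact: cvg_cst|exact: ca]|exact: cc].
have hp : forall phi, (fun q : R * {ptws V -> R} => push X phi q.2 i) @ nbhs p --> push X phi p.2 i.
  move=> phi; exact: (push_cvg (nbhs p) X phi (fun q : R * {ptws V -> R} => q.2) p.2 i hsnd).
change ((fun q => H q i) @ nbhs p --> H p i).
apply: cvgD; [apply: cvgD|]; apply: cvgM.
- exact: hfst.
- exact: hsnd.
- exact: hfst.
- exact: hp.
- exact: hfst.
- exact: hp.
Qed.
Lemma maxr_l (a b : R) : b <= a -> Num.max a b = a.
Proof. by move/max_idPl. Qed.
Lemma maxr_r (a b : R) : a <= b -> Num.max a b = b.
Proof. by move/max_idPr. Qed.

Lemma H_real p : p.1 \in `[0%R, 1%R] -> geom_realization R K p.2 ->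
  geom_realization R K (H p).
Proof.
case: p => l t /=; rewrite in_itv /= => /andP[l0 l1].
move/real_simp => [s [ks hs]]; apply/real_simp.
have hs1 := simp_pt_push (phi := phi1) hX (hKX s ks) hs.
have hs2 := simp_pt_push (phi := phi2 \o phi1) hX (hKX s ks) hs.
have [hl|hl] := lerP (2 * l) 1.
  have ea : wa l = 0 by rewrite /wa maxr_r; lra.
  have ec : wc l = 1 - 2 * l by rewrite /wc maxr_l; lra.
  have eb : wb l = 2 * l by rewrite /wb ea ec; ring.
  exists (map phi1 s ++ map (phi2 \o phi1) s); split.
    by rewrite map_comp; exact: c2.
  have -> : H (l, t) = (fun v => (2 * l) * f1 t v + (1 - 2 * l) * f t v).
    by apply: funext => v; rewrite /H /= ea eb ec mul0r add0r.
  apply: simp_pt_conv => //; try lra.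
have ea : wa l = 2 * l - 1 by rewrite /wa maxr_l; lra.
have ec : wc l = 0 by rewrite /wc maxr_r; lra.
have eb : wb l = 2 - 2 * l by rewrite /wb ea ec; ring.
exists (s ++ map phi1 s); split; first exact: c1.
have -> : H (l, t) = (fun v => (2 * l - 1) * t v + (2 - 2 * l) * f1 t v).
  by apply: funext => v; rewrite /H /= ea eb ec mul0r addr0.
apply: simp_pt_conv => //; try lra.
Qed.

Lemma f_cont : continuous f.
Proof.
move=> p.
apply: (@ptws_cvg_coord R V (f @ nbhs p) _ (f p)) => i.
exact: (push_cvg (nbhs p) X (phi2 \o phi1) (fun q : {ptws V -> R} => q) p i (fun v => proj_cvg v p)).
Qed.

Theorem two_stage : homotopy_equivalent R (geom_realization R K)
  (geom_realization R (induced_sub K W)).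
Proof.
exists f, id; split; [split|split].
- exact: continuous_subspaceT f_cont.
- exact: f_real.
- by apply: continuous_subspaceT => x; exact: cvg_id.
- by move=> y /real_simp [s [[ks _] hs]]; apply/real_simp; exists s.
- exists H; split.
  + exact: continuous_subspaceT H_cont.
  + by move=> p [p1 p2]; exact: H_real.
  + have wa0 : wa 0 = 0 by rewrite /wa maxr_r; lra.
    have wc0 : wc 0 = 1 by rewrite /wc maxr_l; lra.
    have wb0 : wb 0 = 0 by rewrite /wb wa0 wc0; ring.
    move=> x _; apply: funext => v; rewrite /H /= wa0 wb0 wc0; ring.
  + have wa0 : wa 1 = 1 by rewrite /wa maxr_l; lra.
    have wc0 : wc 1 = 0 by rewrite /wc maxr_r; lra.
    have wb0 : wb 1 = 0 by rewrite /wb wa0 wc0; ring.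
    move=> x _; apply: funext => v; rewrite /H /= wa0 wb0 wc0; ring.
- exists (fun p : R * {ptws V -> R} => p.2); split.
  + by apply: continuous_subspaceT => p; exact: snd_cvg.
  + by move=> p [].
  + by move=> x hx; rewrite /= f_id.
  + by [].
Qed.

End Main.

End MT3.
Import MT3.

Module MC1.
Local Open Scope ring_scope.

Section Alex.
Context {n : nat}.
Implicit Types x y z : pt n.

Lemma antilexP x y : reflect (exists i, x i < y i /\ forall j : 'I_n, (i < j)%N -> x j = y j)
  (antilex x y).
Proof.
apply: (iffP existsP) => [[i /andP[h /forallP a]]|[i [h a]]].
  by exists i; split => // j ij; move: (a j); rewrite ij => /eqP.
exists i; rewrite h /=; apply/forallP => j; apply/implyP => ij; apply/eqP; exact: a.
Qed.

Lemma antilex_irr x : ~~ antilex x x.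
Proof. by apply/negP => /antilexP [i [h _]]; rewrite ltxx in h. Qed.

Lemma antilex_trans x y z : antilex x y -> antilex y z -> antilex x z.
Proof.
move=> /antilexP [i [hi ai]] /antilexP [j [hj aj]]; apply/antilexP.
case: (ltngtP i j) => ij.
- exists j; split; first by rewrite ai.
  by move=> k jk; rewrite ai ?aj //; apply: ltn_trans jk.
- exists i; split; first by rewrite -aj.
  by move=> k ik; rewrite ai ?aj //; apply: ltn_trans ik.
- have e : i = j by apply: val_inj.
  subst j; exists i; split; first exact: lt_trans hj.
  by move=> k ik; rewrite ai ?aj.
Qed.

Lemma antilex_tot x y : x != y -> antilex x y || antilex y x.
Proof.
move=> nxy.
have [i0 hi0] : exists i, x i != y i.
  apply/existsP; apply: contraNT nxy => /existsPn h; apply/eqP/ffunP => i.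
  by apply/eqP; move: (h i); rewrite negbK.
case: (@arg_maxnP _ i0 (fun i => x i != y i) (fun i => val i) hi0) => i hi mx.
have above : forall j : 'I_n, (i < j)%N -> x j = y j.
  move=> j ij; apply/eqP; apply: contraTT ij => hj; rewrite -leqNgt; exact: mx.
case: (ltrgtP (x i) (y i)) hi => // h _.
  by apply/orP; left; apply/antilexP; exists i.
by apply/orP; right; apply/antilexP; exists i; split => // j ij; rewrite above.
Qed.

Lemma antilex_tr x y (d : pt n) :
  antilex [ffun i => x i + d i] [ffun i => y i + d i] = antilex x y.
Proof.
apply/antilexP/antilexP => [[i [h a]]|[i [h a]]]; exists i; split.
- by move: h; rewrite !ffunE ltrD2r.
- by move=> j ij; move: (a j ij); rewrite !ffunE => /addIr.
- by rewrite !ffunE ltrD2r.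
- by move=> j ij; rewrite !ffunE a.
Qed.

End Alex.
Arguments antilex_trans {n x y z}.
Arguments antilex_tot {n x y}.

Section Yfacts.
Variables (m n alpha : nat).
Local Notation Y := (Yset m n alpha).
Local Notation Hs := (Hset m n alpha).
Local Notation d := (delta m n alpha).

Lemma inVm (x : pt n) : x \in Vm m n <-> forall i, 0 <= x i <= m%:Z.
Proof.
split.
  by move=> /mapP [f _ ->] i; rewrite ffunE; apply/andP; split => //; rewrite lez_nat -ltnS.
move=> h.
have hb : forall i, (`|x i|%N < m.+1)%N.
  by move=> i; move: (h i) => /andP [a b]; rewrite ltnS -lez_nat gez0_abs.
apply/mapP; exists [ffun i => Ordinal (hb i)]; first by rewrite mem_enum.
apply/ffunP => i; rewrite !ffunE /=; move: (h i) => /andP [a b]; by rewrite gez0_abs.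
Qed.

Lemma min_exists {l : seq (pt n)} : l != [::] ->
  exists2 x, x \in l & forall y, y \in l -> ~~ antilex y x.
Proof.
elim: l => // a l IH _.
have [->|ln] := eqVneq l [::].
  by exists a; rewrite ?mem_head // => y; rewrite inE => /eqP ->; exact: antilex_irr.
have [b bl bm] := IH ln.
have [ab|ab] := boolP (antilex a b).
  exists a; first exact: mem_head.
  move=> y; rewrite inE => /orP [/eqP ->|yl]; first exact: antilex_irr.
  by apply/negP => ya; move: (bm y yl); rewrite (antilex_trans ya ab).
exists b; first by rewrite inE bl orbT.
by move=> y; rewrite inE => /orP [/eqP ->|yl] //; exact: bm.
Qed.

Lemma delta_spec : Hs != [::] -> d \in Hs /\ forall y, y \in Hs -> ~~ antilex y d.
Proof.
move=> hn; have [x xH xm] := min_exists hn.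
set L := [seq x <- Hs | all (fun y => ~~ antilex y x) Hs].
have xL : x \in L by rewrite mem_filter xH andbT; apply/allP.
have : d \in L by rewrite /delta -/L; case: L xL => // a l _; exact: mem_head.
by rewrite mem_filter => /andP [/allP h1 h2]; split => // y /h1.
Qed.

Definition addp (x y : pt n) : pt n := [ffun i => x i + y i].

Lemma addp0 (x : pt n) : addp (origin n) x = x.
Proof. by apply/ffunP => i; rewrite !ffunE add0r. Qed.

Lemma antilex_0 (x : pt n) : antilex (origin n) x = antilex d (addp x d).
Proof. by rewrite -(antilex_tr (origin n) x d) -/(addp (origin n) d) addp0. Qed.

Lemma Y_sub (y : pt n) : y \in Y -> Hs != [::] /\ addp y d \in Hs.
Proof.
move=> /mapP [x xH ->]; split; first by case: (Hs) xH.
have -> : addp [ffun i => x i - d i] d = x by apply/ffunP => i; rewrite !ffunE subrK.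
exact: xH.
Qed.

Lemma H_Vm x : x \in Hs -> x \in Vm m n.
Proof. by rewrite mem_filter => /andP []. Qed.

Lemma Y_box (y : pt n) : y \in Y -> (forall i, 0 <= y i + d i <= m%:Z) /\ (forall i, 0 <= d i <= m%:Z).
Proof.
move=> /Y_sub [hn hy]; split.
  by move=> i; move/H_Vm/inVm: hy => /(_ i); rewrite ffunE.
by have [/H_Vm/inVm h _] := delta_spec hn.
Qed.

Lemma Y_pos (y : pt n) : y \in Y -> y = origin n \/ antilex (origin n) y.
Proof.
move=> /Y_sub [hn hy]; have [dH dm] := delta_spec hn.
have [e|ne] := eqVneq (addp y d) d.
  left; apply/ffunP => i; move/ffunP: e => /(_ i); rewrite !ffunE => e.
  by have := congr1 (fun t => t - d i) e; rewrite /= addrK subrr.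
right; move: (antilex_tot ne); rewrite (negbTE (dm _ hy)) /=.
by rewrite antilex_0.
Qed.

Lemma Y_in (w : pt n) : Hs != [::] -> (forall i, 0 <= w i + d i <= m%:Z) ->
  antilex (origin n) w -> w \in Y.
Proof.
move=> hn hb hw; have [dH dm] := delta_spec hn.
have wd : antilex d (addp w d) by rewrite -antilex_0.
have wH : addp w d \in Hs.
  rewrite mem_filter; apply/andP; split.
    apply: (@leq_trans (count (fun y => antilex y d) (Vm m n))).
      by move: dH; rewrite mem_filter => /andP [].
    by apply: sub_count => y /= yd; exact: antilex_trans yd wd.
  by apply/inVm => i; rewrite ffunE.
apply/mapP; exists (addp w d) => //; apply/ffunP => i; by rewrite !ffunE addrK.
Qed.

End Yfacts.
Arguments Y_sub {m n alpha y}.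
Arguments Y_box {m n alpha y}.
Arguments Y_pos {m n alpha y}.
Arguments Y_in {m n alpha w}.

End MC1.
Import MC1.

Module MC2.
Local Open Scope ring_scope.

Section Flag.
Variables (m n alpha r : nat).
Local Notation Y := (Yset m n alpha).

Definition nrm (x : pt n) : int := \sum_i `|x i|.

Lemma dist0 (x : pt n) : manhattan (origin n) x = nrm x.
Proof. by apply: eq_bigr => i _; rewrite ffunE sub0r normrN. Qed.

Lemma distC (x y : pt n) : manhattan x y = manhattan y x.
Proof. by apply: eq_bigr => i _; rewrite distrC. Qed.

Lemma dist_refl (x : pt n) : manhattan x x = 0.
Proof. by rewrite /manhattan big1 // => i _; rewrite subrr normr0. Qed.

Definition vert (x : pt n) : bool :=
  [&& x \in Y, x != origin n & nrm x <= r%:Z].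

Lemma Gamma_iff s : Gamma m n alpha r s <->
  [/\ origin n \in Y, (forall x, x \in s -> vert x) &
      (forall x y, x \in s -> y \in s -> manhattan x y <= r%:Z)].
Proof.
split.
  move=> [[sY sd] [s0 [s0Y s0d]]]; split.
  - by apply: s0Y; exact: mem_head.
  - move=> x xs; apply/and3P; split; first exact: sY.
      by apply: contraNneq s0 => <-.
    by rewrite -dist0; apply: s0d; rewrite ?inE ?xs ?orbT ?eqxx.
  - exact: sd.
move=> [oY sv sd]; split; first split.
- by move=> x /sv /and3P [].
- exact: sd.
split.
  by apply/negP => /sv /and3P [_ /eqP + _].
split.
  by move=> x; rewrite inE => /orP [/eqP ->|/sv /and3P []].
move=> x y; rewrite !inE => /orP [/eqP ->|xs] /orP [/eqP ->|ys].
- by rewrite dist_refl.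
- by rewrite dist0; case/and3P: (sv y ys).
- by rewrite distC dist0; case/and3P: (sv x xs).
- exact: sd.
Qed.

Lemma Gamma_her s s' : Gamma m n alpha r s -> {subset s' <= s} -> Gamma m n alpha r s'.
Proof.
move=> /Gamma_iff [oY sv sd] ss; apply/Gamma_iff; split => //.
- by move=> x /ss /sv.
- by move=> x y /ss xs /ss ys; exact: sd.
Qed.

Lemma Gamma_contig (U : pt n -> Prop) (psi : pt n -> pt n) s :
  (forall y, vert y -> U y -> vert (psi y) /\ U (psi y)) ->
  (forall y z, vert y -> U y -> vert z -> U z -> manhattan z y <= r%:Z ->
     manhattan z (psi y) <= r%:Z) ->
  Gamma m n alpha r s -> (forall x, x \in s -> U x) ->
  Gamma m n alpha r (s ++ map psi s).
Proof.
move=> hv hd /Gamma_iff [oY sv sd] sU.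
have key : forall x y, x \in s -> y \in s -> manhattan x (psi y) <= r%:Z.
  move=> x y xs ys; apply: hd; [exact: sv|exact: sU|exact: sv|exact: sU|exact: sd].
apply/Gamma_iff; split => //.
  move=> x; rewrite mem_cat => /orP [/sv //|/mapP [y ys ->]].
  by case: (hv y (sv _ ys) (sU _ ys)).
move=> x y; rewrite !mem_cat => /orP [xs|/mapP [x' xs ->]] /orP [ys|/mapP [y' ys ->]].
- exact: sd.
- exact: key.
- by rewrite distC; exact: key.
- case: (hv x' (sv _ xs) (sU _ xs)) => vx ux.
  apply: hd => //; [exact: sv|exact: sU|by rewrite distC; exact: key].
Qed.

End Flag.
Arguments nrm {n}.
Arguments dist0 {n}.
Arguments distC {n}.
Arguments dist_refl {n}.

End MC2.
Import MC2.

Module MC3.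
Local Open Scope ring_scope.

Lemma coord_step (a b : int) : b != 0 ->
  (`|a - (b - Num.sg b)| + 1 = `|a - b|) \/
  (`|a - (b - Num.sg b)| = `|a - b| + 1 /\ `|a - b| + `|b| = `|a|).
Proof.
move=> hb; case: (ltrgtP b 0) hb => hb _ //.
  rewrite ltr0_sg //. lia.
rewrite gtr0_sg //. lia.
Qed.

Lemma coord_abs (b : int) : b != 0 -> `|b - Num.sg b| = `|b| - 1.
Proof.
move=> hb; case: (ltrgtP b 0) hb => hb _ //.
  rewrite ltr0_sg //. lia.
rewrite gtr0_sg //. lia.
Qed.

Definition cstep (w a y z : int) := (w + 1 = a) \/ (w = a + 1 /\ a + y = z).
Lemma lin2 (r A B C ap aq wp wq zp zq yp yq : int) :
  cstep wp ap yp zp -> cstep wq aq yq zq ->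
  ap + aq + A <= r -> zp + zq + B <= r -> yp + yq + C + 2 <= 2 * (yp + yq) ->
  A <= B + C -> wp + wq + A <= r.
Proof. rewrite /cstep; lia. Qed.
Lemma lin4 (r A B ai aj ak al wi wj wk wl zi zj zk zl yi yj yk yl : int) :
  cstep wi ai yi zi -> cstep wj aj yj zj -> cstep wk ak yk zk -> cstep wl al yl zl ->
  ai + aj + ak + al + A <= r -> zi + zj + zk + zl + B <= r ->
  4 <= yi + yj + yk + yl ->
  2 * yi <= yi + yj + yk + yl - 2 -> 2 * yj <= yi + yj + yk + yl - 2 ->
  2 * yk <= yi + yj + yk + yl - 2 -> 2 * yl <= yi + yj + yk + yl - 2 ->
  ai <= zi + yi -> aj <= zj + yj -> ak <= zk + yk -> al <= zl + yl ->
  A <= B -> wi + wj + wk + wl + A <= r.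
Proof. rewrite /cstep; lia. Qed.

Arguments lin2 {r A B C ap aq wp wq zp zq yp yq}.
Arguments lin4 {r A B ai aj ak al wi wj wk wl zi zj zk zl yi yj yk yl}.
Lemma coord_cstep (a b : int) : b != 0 -> cstep `|a - (b - Num.sg b)| `|a - b| `|b| `|a|.
Proof. exact: coord_step. Qed.

Section Shrink.
Variables (m n alpha r : nat).
Local Notation Y := (Yset m n alpha).
Local Notation vert := (vert m n alpha r).

Definition sh (S : seq 'I_n) (y : pt n) : pt n :=
  [ffun i => if i \in S then y i - Num.sg (y i) else y i].

Lemma sh_in S y i : i \in S -> sh S y i = y i - Num.sg (y i).
Proof. by move=> h; rewrite ffunE h. Qed.
Lemma sh_out S y i : i \notin S -> sh S y i = y i.
Proof. by move=> h; rewrite ffunE (negbTE h). Qed.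

Lemma split_sum (F : 'I_n -> int) (S : seq 'I_n) : uniq S ->
  \sum_i F i = \sum_(i <- S) F i + \sum_(i | i \notin S) F i.
Proof. by move=> uS; rewrite (bigID (mem S)) /= big_uniq. Qed.

Lemma decomp (S : seq 'I_n) (z y : pt n) : uniq S ->
  [/\ manhattan z y = \sum_(i <- S) `|z i - y i| + \sum_(i | i \notin S) `|z i - y i|,
     manhattan z (sh S y) = \sum_(i <- S) `|z i - sh S y i| + \sum_(i | i \notin S) `|z i - y i|,
     nrm z = \sum_(i <- S) `|z i| + \sum_(i | i \notin S) `|z i|,
     nrm y = \sum_(i <- S) `|y i| + \sum_(i | i \notin S) `|y i| &
     \sum_(i | i \notin S) `|z i - y i| <= \sum_(i | i \notin S) `|z i| + \sum_(i | i \notin S) `|y i|].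
Proof.
move=> uS; rewrite /manhattan /nrm; split.
- exact: split_sum.
- rewrite (split_sum _ _ uS); congr (_ + _); apply: eq_bigr => i iS; by rewrite sh_out.
- exact: split_sum.
- exact: split_sum.
- by rewrite -big_split /=; apply: ler_sum => i _; exact: ler_normB.
Qed.

Lemma sh_vert (S : seq 'I_n) (y : pt n) : vert y -> (forall i, i \in S -> y i != 0) ->
  (forall i, i \in S -> (forall j : 'I_n, (i < j)%N -> y j = 0) -> 2 <= `|y i|) ->
  S != [::] -> vert (sh S y) /\ nrm (sh S y) < nrm y.
Proof.
move=> /and3P [yY y0 yr] hnz hL hS.
have [hn _] := Y_sub yY.
have [hb db] := Y_box yY.
have ltn : nrm (sh S y) < nrm y.
  case: S hS hnz hL => // i0 S' _ hnz _.
  rewrite /nrm (bigD1 i0) //= [X in _ < X](bigD1 i0) //=.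
  have h0 : `|sh (i0 :: S') y i0| = `|y i0| - 1.
    by rewrite sh_in ?mem_head // coord_abs // hnz ?mem_head.
  apply: ltr_leD; first by rewrite h0; lia.
  apply: ler_sum => i _; have [iS|iS] := boolP (i \in i0 :: S').
    rewrite sh_in //; have [->|yi] := eqVneq (y i) 0; first by rewrite sgr0 subr0.
    by rewrite coord_abs //; lia.
  by rewrite sh_out.
have wpos : antilex (origin n) (sh S y).
  case: (Y_pos yY) => [e|]; first by rewrite e eqxx in y0.
  move=> /antilexP [L [hyL hab]]; apply/antilexP; exists L; rewrite ffunE in hyL.
  have abv : forall j : 'I_n, (L < j)%N -> y j = 0.
    by move=> j Lj; rewrite -hab // ffunE.
  split.
    rewrite [X in X < _]ffunE; have [LS|LS] := boolP (L \in S).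
      rewrite sh_in // gtr0_sg //; have := hL L LS abv; lia.
    by rewrite sh_out.
  move=> j Lj; rewrite [LHS]ffunE; have [jS|jS] := boolP (j \in S).
    by rewrite sh_in // (abv j Lj) sgr0 subr0.
  by rewrite sh_out // abv.
have wY : sh S y \in Y.
  apply: (Y_in hn) => // i; move: (hb i) (db i); rewrite ffunE.
  case: ifP => // _; case: (ltrgtP (y i) 0) => hy.
  - by rewrite ltr0_sg //; lia.
  - by rewrite gtr0_sg //; lia.
  - by rewrite hy sgr0 subr0.
split => //; apply/and3P; split => //.
  by apply/negP => /eqP e; move: wpos; rewrite e (negbTE (antilex_irr _)).
lia.
Qed.

Section Rules.
Variables (z y : pt n).
Hypothesis hz : nrm z <= r%:Z.
Hypothesis hd : manhattan z y <= r%:Z.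

Lemma rule1 p : y p != 0 -> nrm y + 1 <= 2 * `|y p| ->
  manhattan z (sh [:: p] y) <= r%:Z.
Proof.
move=> yp hc.
have [eA eW eZ eY hle] := decomp [:: p] z y (erefl _).
move: hd hz hc; rewrite eW eA eZ eY !big_seq1 sh_in ?mem_head //.
have := coord_step (z p) _ yp; lia.
Qed.

Lemma rule2 p q : p != q -> y p != 0 -> y q != 0 ->
  nrm y + 2 <= 2 * (`|y p| + `|y q|) ->
  manhattan z (sh [:: p; q] y) <= r%:Z.
Proof.
move=> pq yp yq hc.
have u : uniq [:: p; q] by rewrite /= inE pq.
have [eA eW eZ eY hle] := decomp _ z y u.
move: hd hz hc; rewrite eW eA eZ eY !big_cons !big_nil !addr0.
rewrite sh_in ?mem_head // sh_in ?inE ?eqxx ?orbT // => h1 h2 h3.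
exact: (lin2 (coord_cstep _ _ yp) (coord_cstep _ _ yq) h1 h2 h3 hle).
Qed.

Lemma rule4 i j k l : uniq [:: i; j; k; l] ->
  y i != 0 -> y j != 0 -> y k != 0 -> y l != 0 ->
  (forall s, s \notin [:: i; j; k; l] -> y s = 0) ->
  4 <= nrm y ->
  2 * `|y i| <= nrm y - 2 -> 2 * `|y j| <= nrm y - 2 ->
  2 * `|y k| <= nrm y - 2 -> 2 * `|y l| <= nrm y - 2 ->
  manhattan z (sh [:: i; j; k; l] y) <= r%:Z.
Proof.
move=> u yi yj yk yl y0 h4 hi hj hk hl.
have [eA eW eZ eY hle] := decomp _ z y u.
have C0 : \sum_(s | s \notin [:: i; j; k; l]) `|y s| = 0.
  by rewrite big1 // => s /y0 ->; rewrite normr0.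
move: hd hz h4 hi hj hk hl hle; rewrite eW eA eZ eY C0 !big_cons !big_nil !addr0.
rewrite !sh_in ?inE ?eqxx ?orbT // !addrA => e1 e2 e3 e4 e5 e6 e7 e8.
apply: (lin4 (coord_cstep _ _ yi) (coord_cstep _ _ yj) (coord_cstep _ _ yk)
   (coord_cstep _ _ yl) e1 e2 e3 e4 e5 e6 e7 _ _ _ _ e8); exact: ler_normB.
Qed.

Lemma ruleE p : y p != 0 -> (`|y p| <= `|z p| -> manhattan z y < r%:Z) ->
  manhattan z (sh [:: p] y) <= r%:Z.
Proof.
move=> yp hf.
have [eA eW eZ eY hle] := decomp [:: p] z y (erefl _).
have := coord_step (z p) _ yp.
move: hd hf; rewrite eW eA !big_seq1 sh_in ?mem_head //.
lia.
Qed.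

End Rules.
End Shrink.
Arguments sh {n}.
Arguments sh_in {n}.
Arguments sh_out {n}.
Arguments sh_vert {m n alpha r S y}.
Arguments rule1 {n r z y}.
Arguments rule2 {n r z y}.
Arguments rule4 {n r z y}.
Arguments ruleE {n r z y}.

End MC3.
Import MC3.

Module MC4.
Local Open Scope ring_scope.

Definition pr2 (a b s : int) := 2 <= a /\ 2 <= b /\ s + 2 <= 2 * (a + b).
Definition pr4 (a b c d : int) := let s := a + b + c + d in
  2 <= a /\ 2 <= b /\ 2 <= c /\ 2 <= d /\ 4 <= s /\
  2 * a <= s - 2 /\ 2 * b <= s - 2 /\ 2 * c <= s - 2 /\ 2 * d <= s - 2.
Lemma case4 (a b c d h cc r : int) :
  0 <= a -> 0 <= b -> 0 <= c -> 0 <= d ->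
  a < h -> b < h -> c < h -> d < h ->
  a + b <= cc -> a + c <= cc -> a + d <= cc -> b + c <= cc -> b + d <= cc -> c + d <= cc ->
  r - 1 <= a + b + c + d -> a + b + c + d <= r ->
  2 * h <= r -> r <= 2 * h + 1 -> cc = r - h -> 10 <= r ->
  pr2 a b (a+b+c+d) \/ pr2 a c (a+b+c+d) \/ pr2 a d (a+b+c+d) \/ pr2 b c (a+b+c+d) \/
      pr2 b d (a+b+c+d) \/ pr2 c d (a+b+c+d) \/ pr4 a b c d.
Proof.
rewrite /pr2 /pr4 /=.
move=> *.
have [ha|ha] := lerP 2 a; have [hb|hb] := lerP 2 b; have [hc|hc] := lerP 2 c; have [hd|hd] := lerP 2 d.
all: try lia.
Qed.

Arguments case4 {a b c d h cc r}.

Lemma par_term (a b : int) : exists k : int, `|a - b| + `|a| + `|b| = 2 * k.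
Proof.
case: (lerP 0 a) => ha; case: (lerP 0 b) => hb; case: (lerP 0 (a - b)) => hab.
all: try (exists (maxr a b); lia).
all: try (exists (- minr a b); lia).
all: try (exists (a - b); lia).
all: try (exists (b - a); lia).
all: try (exists a; lia).
all: try (exists b; lia).
all: try (exists (-a); lia).
all: try (exists (-b); lia).
Qed.

Lemma parity {n} (z y : pt n) : exists k : int, manhattan z y + nrm z + nrm y = 2 * k.
Proof.
rewrite /manhattan /nrm -!big_split /=.
apply: (big_rec (fun x => exists k : int, x = 2 * k)); first by exists 0; rewrite mulr0.
move=> i x _ [k ->]; have [k' ->] := par_term (z i) (y i).
by exists (k' + k); rewrite mulrDr.
Qed.

Section Steps.
Variables (m n alpha r : nat).
Hypothesis hr : (10 <= r)%N.
Local Notation Y := (Yset m n alpha).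
Local Notation vert := (vert m n alpha r).
Local Notation hh := ((r %/ 2)%N%:Z).
Local Notation cc := (((r + 1) %/ 2)%N%:Z).

Definition exc (y : pt n) : Prop := odd r /\ exists p, [/\ `|y p| = hh,
  (forall j, j != p -> `|y j| <= 1) & nrm y = r%:Z].

Lemma hfacts : [/\ 2 * hh <= r%:Z, r%:Z <= 2 * hh + 1, cc = r%:Z - hh & 10 <= r%:Z].
Proof.
have h1 : (2 * (r %/ 2) <= r <= 2 * (r %/ 2) + 1)%N by lia.
have h2 : ((r + 1) %/ 2 = r - r %/ 2)%N by lia.
split; lia.
Qed.

Lemma nrm_ge0 (x : pt n) : 0 <= nrm x.
Proof. by apply: sumr_ge0. Qed.

Lemma abs_le_nrm (x : pt n) i : `|x i| <= nrm x.
Proof.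
rewrite /nrm (bigD1 i) //= lerDl; exact: sumr_ge0.
Qed.

Lemma use_rule (S : seq 'I_n) y : vert y -> (forall i, i \in S -> y i != 0) ->
  (forall i, i \in S -> (forall j : 'I_n, (i < j)%N -> y j = 0) -> 2 <= `|y i|) ->
  S != [::] ->
  (forall z, nrm z <= r%:Z -> manhattan z y <= r%:Z -> manhattan z (sh S y) <= r%:Z) ->
  exists w, [/\ vert w, nrm w < nrm y &
     forall z, vert z -> manhattan z y <= r%:Z -> manhattan z w <= r%:Z].
Proof.
move=> vy nz sf sn hd; have [vw lw] := sh_vert vy nz sf sn.
exists (sh S y); split => // z /and3P [_ _ zr]; exact: hd.
Qed.

Lemma nz_ge1 {a : int} : a != 0 -> 1 <= `|a|.
Proof. move=> h; lia. Qed.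

Lemma step1 y : vert y -> ~ good_vertex n r y -> ~ exc y ->
  exists w, [/\ vert w, nrm w < nrm y &
     forall z, vert z -> manhattan z y <= r%:Z -> manhattan z w <= r%:Z].
Proof.
move=> vy ng ne.
have [hf1 hf2 hf3 hf4] := hfacts.
have yr : nrm y <= r%:Z by case/and3P: vy.
have [hA|hA] := pselect (forall i, `|y i| < hh); last first.
  move/existsNP: hA => [i hi].
  have hi' : hh <= `|y i| by rewrite leNgt; apply/negP.
  have yi0 : y i != 0 by apply: contraTneq hi' => ->; rewrite normr0; lia.
  have [c1|c1] := lerP (nrm y + 1) (2 * `|y i|).
    apply: (use_rule [:: i]) => //.
    - by move=> t; rewrite inE => /eqP ->.
    - by move=> t; rewrite inE => /eqP -> _; lia.
    - by move=> z hz hd; exact: (rule1 hz hd i yi0 c1).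
  have [[j [ji yj2]]|hall] := pselect (exists j, j != i /\ 2 <= `|y j|).
    have yj0 : y j != 0 by apply: contraTneq yj2 => ->; rewrite normr0.
    apply: (use_rule [:: i; j]) => //.
    - by move=> t; rewrite !inE => /orP [/eqP ->|/eqP ->].
    - by move=> t; rewrite !inE => /orP [/eqP ->|/eqP ->] _; lia.
    - move=> z hz hd; apply: (rule2 hz hd) => //; [by rewrite eq_sym | lia].
  have hall' : forall j, j != i -> `|y j| <= 1.
    move=> j ji; have [//|hj] := lerP (`|y j|) 1; exfalso; apply: hall.
    by exists j; split => //; lia.
  have [e2|ne2] := eqVneq (2 * `|y i|) (nrm y); last first.
    exfalso; apply: ne; split.
      have e : r%:Z = 2 * hh + 1 by lia.
      have : (r %% 2 = 1)%N by lia.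
      by rewrite modn2; case: (odd r).
    by exists i; split => //; lia.
  have [j1 [j1i yj1]] : exists j1, j1 != i /\ y j1 != 0.
    apply: contrapT => H.
    have : nrm y = `|y i|.
      rewrite /nrm (bigD1 i) //= big1 ?addr0 // => j ji.
      case: (eqVneq (y j) 0) => [->|yj]; first by rewrite normr0.
      by exfalso; apply: H; exists j.
    lia.
  have [j2 [j2i [j21 yj2]]] : exists j2, j2 != i /\ j2 != j1 /\ y j2 != 0.
    apply: contrapT => H.
    have : nrm y = `|y i| + `|y j1|.
      rewrite /nrm (bigD1 i) //= (bigD1 j1) /=; last by rewrite j1i.
      rewrite big1 ?addr0 // => j /andP [ji jj1].
      case: (eqVneq (y j) 0) => [->|yj]; first by rewrite normr0.
      by exfalso; apply: H; exists j.
    have := hall' j1 j1i; lia.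
  have gen : forall ja jb : 'I_n, ja != i -> y ja != 0 -> y jb != 0 -> (ja < jb)%N ->
      exists w, [/\ vert w, nrm w < nrm y &
        forall z, vert z -> manhattan z y <= r%:Z -> manhattan z w <= r%:Z].
    move=> ja jb jai yja yjb ab.
    apply: (use_rule [:: i; ja]) => //.
    - by move=> t; rewrite !inE => /orP [/eqP ->|/eqP ->].
    - move=> t; rewrite !inE => /orP [/eqP -> _|/eqP -> H]; first lia.
      by move: yjb; rewrite H // eqxx.
    - move=> z hz hd; apply: (rule2 hz hd) => //; first by rewrite eq_sym.
      have := nz_ge1 yja; lia.
  case: (ltngtP j1 j2) => h12.
  - exact: gen j1 j2 j1i yj1 yj2 h12.
  - exact: gen j2 j1 j2i yj2 yj1 h12.
  - by move: j21; rewrite (val_inj h12) eqxx.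
have [hB|hB] := pselect (forall j k : 'I_n, j != k -> `|y j| + `|y k| <= cc); last first.
  move/existsNP: hB => [j /existsNP [k /not_implyP [jk hs]]].
  have hs' : cc < `|y j| + `|y k| by rewrite ltNge; apply/negP.
  have := hA j; have := hA k => hk hj.
  have yj0 : y j != 0 by apply: contraTneq hs' => ->; rewrite normr0; lia.
  have yk0 : y k != 0 by apply: contraTneq hs' => ->; rewrite normr0; lia.
  apply: (use_rule [:: j; k]) => //.
  - by move=> t; rewrite !inE => /orP [/eqP ->|/eqP ->].
  - by move=> t; rewrite !inE => /orP [/eqP ->|/eqP ->] _; lia.
  - move=> z hz hd; apply: (rule2 hz hd) => //; lia.
have hC : exists i j k l : 'I_n,
           [/\ uniq [:: i; j; k; l],
               `|y i| + `|y j| + `|y k| + `|y l| >= r%:Z - 1 &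
               forall s : 'I_n, s \notin [:: i; j; k; l] -> y s = 0].
  by apply: contrapT => H; apply: ng; split.
case: hC => i [j [k [l [u hs hz]]]].
have u' := u.
move: u' => /= /andP [hi /andP [hj /andP [hk _]]].
move: hi hj hk; rewrite !inE !negb_or => /and3P [ij ik il] /andP [jk jl] kl.
have en : nrm y = `|y i| + `|y j| + `|y k| + `|y l|.
  have r0 : \sum_(s | s \notin [:: i; j; k; l]) `|y s| = 0.
    by rewrite big1 // => s sS; rewrite hz // normr0.
  by rewrite /nrm (split_sum _ _ _ u) r0 addr0 !big_cons big_nil addr0 !addrA.
have hs2 : `|y i| + `|y j| + `|y k| + `|y l| <= r%:Z by rewrite -en.
have := case4 (normr_ge0 (y i)) (normr_ge0 (y j)) (normr_ge0 (y k)) (normr_ge0 (y l))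
  (hA i) (hA j) (hA k) (hA l) (hB _ _ ij) (hB _ _ ik) (hB _ _ il) (hB _ _ jk)
  (hB _ _ jl) (hB _ _ kl) hs hs2 hf1 hf2 hf3 hf4.
rewrite -en /pr2 /pr4 /=.
have nz2 : forall t, 2 <= `|y t| -> y t != 0.
  by move=> t ht; apply: contraTneq ht => ->; rewrite normr0.
have pair : forall a b : 'I_n, a != b -> 2 <= `|y a| -> 2 <= `|y b| ->
   nrm y + 2 <= 2 * (`|y a| + `|y b|) ->
   exists w, [/\ vert w, nrm w < nrm y &
     forall z, vert z -> manhattan z y <= r%:Z -> manhattan z w <= r%:Z].
  move=> a b ab ha hb hc.
  apply: (use_rule [:: a; b]) => //.
  - by move=> t; rewrite !inE => /orP [/eqP ->|/eqP ->]; apply: nz2.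
  - by move=> t; rewrite !inE => /orP [/eqP ->|/eqP ->].
  - move=> z hz' hd; exact: (rule2 hz' hd a b ab (nz2 _ ha) (nz2 _ hb) hc).
case=> [[h1 [h2 h3]]|[[h1 [h2 h3]]|[[h1 [h2 h3]]|[[h1 [h2 h3]]|[[h1 [h2 h3]]|
        [[h1 [h2 h3]]|[h1 [h2 [h3 [h4 [h5 [h6 [h7 [h8 h9]]]]]]]]]]]]]].
- exact: pair i j ij h1 h2 h3.
- exact: pair i k ik h1 h2 h3.
- exact: pair i l il h1 h2 h3.
- exact: pair j k jk h1 h2 h3.
- exact: pair j l jl h1 h2 h3.
- exact: pair k l kl h1 h2 h3.
apply: (use_rule [:: i; j; k; l]) => //.
- by move=> t; rewrite !inE => /or4P [/eqP ->|/eqP ->|/eqP ->|/eqP ->]; apply: nz2.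
- by move=> t; rewrite !inE => /or4P [/eqP ->|/eqP ->|/eqP ->|/eqP ->].
- move=> z hz' hd; apply: (rule4 hz' hd i j k l u) => //; try (apply: nz2 => //); rewrite en //.
Qed.

Lemma step2 y : vert y -> exc y ->
  exists w, [/\ vert w, good_vertex n r w &
     forall z, vert z -> (good_vertex n r z \/ exc z) ->
       manhattan z y <= r%:Z -> manhattan z w <= r%:Z].
Proof.
move=> vy [od [p [yp yo yn]]].
have [hf1 hf2 hf3 hf4] := hfacts.
have er : r%:Z = 2 * hh + 1.
  have : (r %% 2 = 1)%N by rewrite modn2 od.
  lia.
have yp0 : y p != 0 by apply/eqP => e; move: yp; rewrite e normr0; lia.
have nz1 : forall t, t \in [:: p] -> y t != 0 by move=> t; rewrite inE => /eqP ->.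
have sf1 : forall t, t \in [:: p] -> (forall j : 'I_n, (t < j)%N -> y j = 0) -> 2 <= `|y t|.
  by move=> t; rewrite inE => /eqP -> _; lia.
have [vw _] := @sh_vert m n alpha r [:: p] y vy nz1 sf1 erefl.
exists (sh [:: p] y); split => //.
- have wp : `|sh [:: p] y p| = hh - 1 by rewrite sh_in ?mem_head // coord_abs // yp.
  have wo : forall t, t != p -> `|sh [:: p] y t| <= 1.
    by move=> t tp; rewrite sh_out ?inE //; exact: yo.
  have wo' : forall t, p != t -> `|sh [:: p] y t| <= 1.
    by move=> t; rewrite eq_sym; exact: wo.
  split.
  + move=> t; have [->|tp] := eqVneq t p; first by rewrite wp; lia.
    have := wo t tp; lia.
  + move=> j k jk; have [e|jp] := eqVneq j p.
      by subst j; rewrite wp; have := wo' k jk; lia.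
    have [->|kp] := eqVneq k p; first by rewrite wp; have := wo j jp; lia.
    by have := wo j jp; have := wo k kp; lia.
  + move=> [i [j [k [l [u hs _]]]]].
    move: u => /= /andP [hi /andP [hj /andP [hk _]]].
    move: hi hj hk; rewrite !inE !negb_or => /and3P [ij ik il] /andP [jk jl] kl.
    have [ip|ip] := eqVneq i p.
      subst i; have := wo' j ij; have := wo' k ik; have := wo' l il; move: wp hs er hf4.
      clear; lia.
    have [jp|jp] := eqVneq j p.
      subst j; have := wo i ip; have := wo' k jk; have := wo' l jl; move: wp hs er hf4.
      clear; lia.
    have [kp|kp] := eqVneq k p.
      subst k; have := wo i ip; have := wo j jp; have := wo' l kl; move: wp hs er hf4.
      clear; lia.
    have [lp|lp] := eqVneq l p.
      subst l; have := wo i ip; have := wo j jp; have := wo k kp; move: wp hs er hf4.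
      clear; lia.
    have := wo i ip; have := wo j jp; have := wo k kp; have := wo l lp; move: hs er hf4.
    clear; lia.
- move=> z /and3P [_ _ zr] gz hd; apply: (ruleE zr hd p yp0) => hf.
  case: gz => [[hA _ _]|[_ [q [zq zo zn]]]].
    by have := hA p; lia.
  have [k hk] := parity z y.
  have : manhattan z y != r%:Z.
    apply/eqP => e; rewrite e zn yn in hk; lia.
  lia.
Qed.

End Steps.

End MC4.
Import MC4.

Module MC5.
Local Open Scope ring_scope.

Section Final.
Variables (m n alpha r : nat).
Hypothesis hr : (10 <= r)%N.
Local Notation vert := (vert m n alpha r).
Local Notation good := (good_vertex n r).
Local Notation exc := (exc n r).

Definition P1 (y : pt n) := [/\ vert y, ~ good y & ~ exc y].

Definition st1 (y : pt n) : pt n :=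
  match pselect (P1 y) with
  | left H => let: And3 a b c := H in sval (cid (@step1 m n alpha r hr y a b c))
  | right _ => y end.

Lemma st1_spec {y} : vert y -> [/\ vert (st1 y),
  (forall z, vert z -> manhattan z y <= r%:Z -> manhattan z (st1 y) <= r%:Z),
  (P1 y -> nrm (st1 y) < nrm y) & (~ P1 y -> st1 y = y)].
Proof.
move=> vy; rewrite /st1; case: pselect => [[a b c]|np].
  case: cid => w [vw lw dw] /=; split => // np; exfalso; exact: np (And3 a b c).
by split => // ? _ ?.
Qed.

Definition phi1 (y : pt n) : pt n := iter r.+1 st1 y.

Lemma iter_spec k {y} : vert y -> [/\ vert (iter k st1 y),
  (forall z, vert z -> manhattan z y <= r%:Z -> manhattan z (iter k st1 y) <= r%:Z) &
  (P1 (iter k st1 y) -> nrm (iter k st1 y) + k%:Z <= nrm y)].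
Proof.
move=> vy; elim: k => [|k [vk dk pk]] /=.
  split => //; last by move=> _; rewrite addr0.
have [v1 d1 p1 n1] := st1_spec vk.
split => //.
  by move=> z vz hz; apply: d1 => //; exact: dk.
move=> hp; have [hk|hk] := pselect (P1 (iter k st1 y)).
  have := p1 hk; have := pk hk; lia.
by move: hp; rewrite n1.
Qed.

Lemma iter_good k y : good y -> iter k st1 y = y.
Proof.
move=> gy; elim: k => //= k ->.
by rewrite /st1; case: pselect => [H|//]; exfalso; move: H => [_ ng _]; exact: ng gy.
Qed.

Lemma phi1_spec {y} : vert y -> [/\ vert (phi1 y),
  (forall z, vert z -> manhattan z y <= r%:Z -> manhattan z (phi1 y) <= r%:Z) &
  (good (phi1 y) \/ exc (phi1 y))].
Proof.
move=> vy; have [v d p] := iter_spec r.+1 vy; split => //.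
have [g|hg] := pselect (good (phi1 y)); first by left. right.
apply: contrapT => he.
have := p (And3 v hg he).
have := @nrm_ge0 n (iter r.+1 st1 y); case/and3P: vy => _ _ yr; lia.
Qed.

Definition phi2 (y : pt n) : pt n :=
  match pselect (vert y /\ exc y) with
  | left H => sval (cid (@step2 m n alpha r hr y H.1 H.2))
  | right _ => y end.

Lemma good_not_exc y : good y -> ~ exc y.
Proof. by move=> [hA _ _] [_ [p [hp _ _]]]; have := hA p; rewrite hp ltxx. Qed.

Lemma phi2_spec {y} : vert y -> good y \/ exc y -> [/\ vert (phi2 y), good (phi2 y) &
  (forall z, vert z -> good z \/ exc z -> manhattan z y <= r%:Z ->
     manhattan z (phi2 y) <= r%:Z)].
Proof.
move=> vy hy; rewrite /phi2; case: pselect => [H|nH].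
  by case: cid => w [].
case: hy => [gy|ey]; last by exfalso; apply: nH.
by split.
Qed.

Lemma phi2_good y : good y -> phi2 y = y.
Proof.
move=> gy; rewrite /phi2; case: pselect => [H|//].
by exfalso; exact: good_not_exc gy H.2.
Qed.

Lemma phi1_good y : good y -> phi1 y = y.
Proof. exact: iter_good. Qed.

Theorem main_thm (R : realType) :
  homotopy_equivalent R
    (geom_realization R (Gamma m n alpha r))
    (geom_realization R (induced_sub (Gamma m n alpha r) (good_vertex n r))).
Proof.
apply: (two_stage R (pt n) (Gamma m n alpha r) (undup (Yset m n alpha))
         good phi1 phi2).
- exact: undup_uniq.
- move=> s /Gamma_iff [_ sv _] x /sv /and3P [xY _ _]; by rewrite mem_undup.
- move=> s s' ks ss; exact: (@Gamma_her m n alpha r s s' ks ss).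
- move=> s ks; apply: (@Gamma_contig m n alpha r (fun _ => True) phi1) => //.
  + by move=> y vy _; case: (phi1_spec vy).
  + by move=> y z vy _ vz _; case: (phi1_spec vy) => _ d _; exact: d.
- move=> s ks.
  have ks1 : Gamma m n alpha r (map phi1 s).
    apply: (@Gamma_her m n alpha r (s ++ map phi1 s)).
      apply: (@Gamma_contig m n alpha r (fun _ => True) phi1) => //.
      + by move=> y vy _; case: (phi1_spec vy).
      + by move=> y z vy _ vz _; case: (phi1_spec vy) => _ d _; exact: d.
    by move=> x xs; rewrite mem_cat xs orbT.
  apply: (@Gamma_contig m n alpha r (fun y => good y \/ exc y) phi2) => //.
  + by move=> y vy uy; case: (phi2_spec vy uy) => v g _; split => //; left.
  + move=> y z vy uy vz uz; case: (phi2_spec vy uy) => _ _ d; exact: d.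
  + move=> x /mapP [y ys ->]; move/Gamma_iff: ks => [_ sv _].
    by case: (phi1_spec (sv y ys)).
- move=> s /Gamma_iff [_ sv _] v vs.
  have [v1 _ g1] := phi1_spec (sv v vs).
  by case: (phi2_spec v1 g1).
- by move=> v gv; rewrite phi1_good // phi2_good.
Qed.

End Final.

End MC5.
Import MC5.

Theorem lemma3p11 (R : realType) (m n r alpha : nat) :
  (1 <= m)%N -> (5 <= n)%N -> (n <= r)%N -> (10 <= r)%N ->
  (1 <= alpha)%N -> (alpha < m.+1 ^ n)%N ->
  homotopy_equivalent R
    (geom_realization R (Gamma m n alpha r))
    (geom_realization R (induced_sub (Gamma m n alpha r) (good_vertex n r))).
Proof.
move=> _ _ _ hr _ _.
exact: (@main_thm m n alpha r hr R).
Qed.
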